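(* Assume $\mathcal M$ satisfies extensibility. Let $\lambda\in\mathbb R^A$, $\lambda>0$, whose partition of $A$ by equality of $\lambda_i$ is $S_1,\dots,S_{k-1},A'$ with $\lambda(S_1)<\dots<\lambda(S_{k-1})<\lambda(A')$. Let $S_k\subset A'$ and let $\lambda'\ge\lambda$ (componentwise, $\lambda'>0$) be such that its partition by equality of $\lambda'_i$ is $S_1,\dots,S_k,A'\setminus S_k$ with $\lambda'(S_1)<\dots<\lambda'(S_k)<\lambda'(A'\setminus S_k)$. Then for every $g<k$: $\mathrm{delay}_{S_g}(X)=\mathrm{delay}_{S_g}(X')$ for any optimal solution $X$ of $LP(\lambda)$ and any optimal solution $X'$ of $LP(\lambda')$; and for every $T\subseteq S_g$, $\max\{\mathrm{delay}_T(X): X\text{ optimal for }LP(\lambda)\}=\max\{\mathrm{delay}_T(X): X\text{ optimal for }LP(\lambda')\}$.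
   Context: A market $\mathcal M$: finite agent set $A$, finite goods set $G$ (supply $1$ each), finite index set $C$; agent $i$ has real coefficients $a_{ijk}$, requirements $r_{ik}\ge0$, delays $d_{ij}\ge0$. CC$(i)$: $\sum_ja_{ijk}x_{ij}\ge r_{ik}$ for all $k$, $x_{ij}\ge0$. An allocation $X\ge0$ is supply respecting if $\sum_ix_{ij}\le1$ for all $j$. For $S\subseteq A$, $X$ is jointly optimal for $S$ if it satisfies CC$(i)$ for all $i\in S$, is supply respecting, and minimizes $\sum_{i\in S}\sum_jd_{ij}x_{ij}$ among such allocations. Extensibility: for every $S\subset A$, every $X$ jointly optimal for $S$ and every $i\in A\setminus S$, there is $X'$ jointly optimal for $S\cup\{i\}$ with $\sum_jd_{i'j}x'_{i'j}=\sum_jd_{i'j}x_{i'j}$ for all $i'\in S$. $LP(\lambda)$: minimize $\sum_i\lambda_i\sum_jd_{ij}x_{ij}$ s.t. $\sum_ja_{ijk}x_{ij}\ge r_{ik}$ for all $(i,k)$, $\sum_ix_{ij}\le1$ for all $j$, $x\ge0$ (assumed feasible). $\mathrm{delay}_S(X)=\sum_{i\in S}\sum_jd_{ij}x_{ij}$; $\lambda(S)$ is the common value of $\lambda_i$ on $S$. *)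

(* Defs.v *)
From HB Require Import structures.
From mathcomp Require Import all_boot all_order all_algebra.
Set Implicit Arguments. Unset Strict Implicit. Unset Printing Implicit Defensive.
Import Order.TTheory GRing.Theory Num.Theory.
Local Open Scope ring_scope.

Section Market.
Variables (R : realFieldType) (A G C : finType).
Variables (a : A -> G -> C -> R) (r : A -> C -> R) (d : A -> G -> R).

Definition nonneg (X : A -> G -> R) : Prop := forall i j, 0 <= X i j.

Definition CC (i : A) (X : A -> G -> R) : Prop :=
  (forall k, r i k <= \sum_j a i j k * X i j) /\ (forall j, 0 <= X i j).

Definition supply_respecting (X : A -> G -> R) : Prop :=
  nonneg X /\ forall j, \sum_i X i j <= 1.

Definition delay (S : {set A}) (X : A -> G -> R) : R :=
  \sum_(i in S) \sum_j d i j * X i j.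

Definition jfeasible (S : {set A}) (X : A -> G -> R) : Prop :=
  (forall i, i \in S -> CC i X) /\ supply_respecting X.

Definition jointly_optimal (S : {set A}) (X : A -> G -> R) : Prop :=
  jfeasible S X /\ forall Y, jfeasible S Y -> delay S X <= delay S Y.

Definition extensibility : Prop :=
  forall (S : {set A}) (X : A -> G -> R) (i : A),
    S \proper [set: A] -> jointly_optimal S X -> i \notin S ->
    exists X', jointly_optimal (i |: S) X' /\
      forall i', i' \in S ->
        \sum_j d i' j * X' i' j = \sum_j d i' j * X i' j.

Definition LPfeasible (X : A -> G -> R) : Prop := jfeasible [set: A] X.

Definition LPobj (lam : A -> R) (X : A -> G -> R) : R :=
  \sum_i lam i * \sum_j d i j * X i j.

Definition LPoptimal (lam : A -> R) (X : A -> G -> R) : Prop :=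
  LPfeasible X /\ forall Y, LPfeasible Y -> LPobj lam X <= LPobj lam Y.

Definition is_max_delay (lam : A -> R) (T : {set A}) (m : R) : Prop :=
  (exists X, LPoptimal lam X /\ delay T X = m) /\
  (forall X, LPoptimal lam X -> delay T X <= m).

End Market.

(* P (an ordered list of blocks) is the partition of A into classes of equal
   lam-value, listed in strictly increasing order of the common value:
   blocks are nonempty, cover A, and for i in block g, j in block h,
   lam i < lam j iff g < h (this forces lam constant on each block,
   distinct values on distinct blocks, and disjointness). *)
Definition level_partition (R : realFieldType) (A : finType)
    (lam : A -> R) (P : seq {set A}) : Prop :=
  (forall g, (g < size P)%N -> nth set0 P g != set0) /\
  (forall i, exists g, (g < size P)%N /\ i \in nth set0 P g) /\
  (forall g h i j, (g < size P)%N -> (h < size P)%N ->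
      i \in nth set0 P g -> j \in nth set0 P h ->
      (lam i < lam j <-> (g < h)%N)).

(* Main.v *)
Require Import Defs.
From HB Require Import structures.
From mathcomp Require Import all_boot all_order all_algebra.
From mathcomp Require Import zify ring lra.
Import Order.TTheory GRing.Theory Num.Theory.
Local Open Scope ring_scope.
Set Implicit Arguments. Unset Strict Implicit. Unset Printing Implicit Defensive.
Notation up lam c := [set i | c <= lam i].
Notation sup lam c := [set i | c < lam i].

Section Gen.
Variables (R : realFieldType) (A G C : finType).
Variables (a : A -> G -> C -> R) (r : A -> C -> R) (d : A -> G -> R).
Hypothesis hext : extensibility a r d.

Local Notation JO := (jointly_optimal a r d).
Local Notation Dl i X := (\sum_j d i j * X i j).

Lemma jfeas_sub (S U : {set A}) X : S \subset U -> jfeasible a r U X -> jfeasible a r S X.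
Proof.
move=> sSU [hcc hs]; split=> // i iS; apply: hcc; exact: (subsetP sSU).
Qed.

Lemma JO_pres (S U : {set A}) X X' : S \subset U -> JO S X -> jfeasible a r S X' ->
  (forall i, i \in U -> Dl i X' = Dl i X) -> JO S X'.
Proof.
move=> sSU [fX oX] fX' hD; split=> // Y fY.
have -> : delay d S X' = delay d S X.
  by apply: eq_bigr => i iS; apply: hD; exact: (subsetP sSU).
exact: oX.
Qed.

Lemma ext_sub (S U : {set A}) X : JO S X -> S \subset U ->
  exists X', JO U X' /\ forall i, i \in S -> Dl i X' = Dl i X.
Proof.
have [n] := ubnP #|U :\: S|; elim: n S X => // n IH S X hn oX sSU.
case: (set_0Vmem (U :\: S)) => [e|[i iUS]].
  have -> : U = S.
    apply/eqP; rewrite eqEsubset sSU andbT; apply/subsetP => x xU.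
    apply/negPn/negP => xS.
    have : x \in U :\: S by rewrite !inE xU xS.
    by rewrite e inE.
  by exists X.
move: iUS; rewrite inE => /andP [iS iU].
have prS : S \proper [set: A].
  by rewrite properEneq subsetT andbT; apply/eqP => eS; move: iS; rewrite eS inE.
have [X1 [o1 h1]] := hext prS oX iS.
have sS1U : i |: S \subset U by rewrite subUset sub1set iU sSU.
have hn1 : (#|U :\: (i |: S)| < n)%N.
  rewrite -ltnS; apply: leq_trans hn; rewrite ltnS; apply: proper_card; rewrite properEneq; apply/andP; split.
    apply/eqP => e; have : i \in U :\: S by rewrite inE iS iU.
    by rewrite -e !inE eqxx.
  by apply: setDS; rewrite subsetUr.
have [X2 [o2 h2]] := IH _ _ hn1 o1 sS1U.
exists X2; split=> // j jS; rewrite h2 ?h1 //; by rewrite inE jS orbT.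
Qed.

Lemma JO0 Z : supply_respecting Z -> JO set0 Z.
Proof.
move=> hs; split; first by split=> // i; rewrite inE.
by move=> Y _; rewrite /delay !big_set0.
Qed.

Lemma JO_eq (S : {set A}) X Y : JO S X -> JO S Y -> delay d S X = delay d S Y.
Proof. by move=> [fX oX] [fY oY]; apply/le_anti; rewrite oX // oY. Qed.


Definition JOall (lam : A -> R) Z := LPfeasible a r Z /\ forall c, 0 < c -> JO (up lam c) Z.

Lemma sup_up (lam : A -> R) c : sup lam c = set0 \/
  exists m, [/\ c < m, sup lam c = up lam m & (#|sup lam m| < #|sup lam c|)%N].
Proof.
case: (set_0Vmem (sup lam c)) => [->|[i0 Hi0]]; [by left|right].
have [i1 Hi1' Hmin'] := arg_minP lam Hi0.
have Hi1 : i1 \in sup lam c := Hi1'.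
have Hmin : forall j, j \in sup lam c -> lam i1 <= lam j := Hmin'.
have ci1 : c < lam i1 by move: Hi1; rewrite inE.
exists (lam i1); split => //.
  apply/setP => j; rewrite !inE; apply/idP/idP.
    by move=> hj; apply: Hmin; rewrite inE.
  by move=> hj; apply: lt_le_trans hj.
apply: proper_card; rewrite properEneq; apply/andP; split.
  by apply/eqP => e; move: Hi1; rewrite -e inE ltxx.
by apply/subsetP => j; rewrite !inE => h; apply: lt_trans h.
Qed.

Lemma up_empty (lam : A -> R) c c' : sup lam c = set0 -> c < c' -> up lam c' = set0.
Proof.
move=> e cc; apply/setP => i; rewrite !inE.
apply/negbTE/negP => h.
have : i \in sup lam c by rewrite inE (lt_le_trans cc h).
by rewrite e inE.
Qed.

Lemma up_mid (lam : A -> R) c m c' : sup lam c = up lam m -> c < c' -> c' <= m ->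
  up lam c' = up lam m.
Proof.
move=> e cc cm; apply/setP => i; rewrite !inE; apply/idP/idP => h.
  have : i \in sup lam c by rewrite inE (lt_le_trans cc h).
  by rewrite e inE.
exact: le_trans h.
Qed.

Lemma JOall_sup (lam : A -> R) Z c : JOall lam Z -> 0 <= c -> JO (sup lam c) Z.
Proof.
move=> [fZ oZ] c0; case: (sup_up lam c) => [->|[m [cm -> _]]].
  by apply: JO0; case: fZ.
by apply: oZ; apply: le_lt_trans cm.
Qed.

Lemma split_sum (lam : A -> R) c m X : sup lam c = up lam m -> c < m ->
  \sum_(i in sup lam c) (lam i - c) * Dl i X =
  (m - c) * delay d (up lam m) X + \sum_(i in sup lam m) (lam i - m) * Dl i X.
Proof.
move=> e cm.
have -> : \sum_(i in sup lam c) (lam i - c) * Dl i X =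
   \sum_(i in sup lam c) ((m - c) * Dl i X + (lam i - m) * Dl i X).
  by apply: eq_bigr => i _; ring.
rewrite big_split /= -mulr_sumr /delay -e; congr (_ + _).
rewrite big_mkcond [RHS]big_mkcond /=; apply: eq_bigr => i _.
have := erefl (i \in sup lam c); rewrite {2}e !inE.
case: ifP => h1; case: ifP => h2 //.
- move=> hm; have : lam i = m by apply/le_anti; rewrite -hm leNgt h2.
  by move=> ->; rewrite subrr mul0r.
- by move=> _; move: h1; rewrite (lt_trans cm h2).
Qed.

Lemma key (lam : A -> R) Z Y : JOall lam Z -> LPfeasible a r Y -> forall c, 0 <= c ->
  \sum_(i in sup lam c) (lam i - c) * Dl i Z <= \sum_(i in sup lam c) (lam i - c) * Dl i Y /\
  (\sum_(i in sup lam c) (lam i - c) * Dl i Z = \sum_(i in sup lam c) (lam i - c) * Dl i Y ->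
   forall c', c < c' -> delay d (up lam c') Z = delay d (up lam c') Y).
Proof.
move=> hZ fY c.
have [n] := ubnP #|sup lam c|; elim: n c => // n IH c hn c0.
case: (sup_up lam c) => [e|[m [cm e hm]]].
  rewrite e !big_set0; split=> // _ c' cc.
  by rewrite (up_empty e cc) /delay !big_set0.
have m0 : 0 <= m by apply: le_trans (ltW cm).
have [IH1 IH2] := IH m (leq_trans hm hn) m0.
rewrite !(split_sum _ e cm).
have hd : delay d (up lam m) Z <= delay d (up lam m) Y.
  case: hZ => _ oZ; case: (oZ m (le_lt_trans c0 cm)) => _; apply.
  by apply: jfeas_sub fY; exact: subsetT.
have hd' : (m - c) * delay d (up lam m) Z <= (m - c) * delay d (up lam m) Y.
  by rewrite ler_wpM2l // subr_ge0 ltW.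
split; first by apply: lerD.
move=> heq.
have [e1 e2] : (m - c) * delay d (up lam m) Z = (m - c) * delay d (up lam m) Y /\
   \sum_(i in sup lam m) (lam i - m) * Dl i Z = \sum_(i in sup lam m) (lam i - m) * Dl i Y.
  split; apply/le_anti; rewrite ?hd' ?IH1 //=.
    by move: heq IH1; set u := \sum_(i in _) _; set v := \sum_(i in _) _; lra.
  by move: heq hd'; set u := (m - c) * _; set v := (m - c) * _; lra.
move=> c' cc'; case: (leP c' m) => hc'.
  rewrite (up_mid e cc' hc'); apply: (mulfI _ e1).
  by rewrite subr_eq0 gt_eqF.
exact: IH2.
Qed.

Lemma sup0 (lam : A -> R) : (forall i, 0 < lam i) -> sup lam 0 = [set: A].
Proof. by move=> hl; apply/setP => i; rewrite !inE hl. Qed.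

Lemma LPobj_sup (lam : A -> R) X : (forall i, 0 < lam i) ->
  LPobj d lam X = \sum_(i in sup lam 0) (lam i - 0) * Dl i X.
Proof.
move=> hl; rewrite /LPobj; apply: eq_big => [i|i _]; first by rewrite inE hl.
by rewrite subr0.
Qed.

Lemma JOall_opt (lam : A -> R) Z : (forall i, 0 < lam i) -> JOall lam Z -> LPoptimal a r d lam Z.
Proof.
move=> hl hZ; split; first by case: hZ.
move=> Y fY; rewrite !LPobj_sup //; by case: (key hZ fY (lexx 0)).
Qed.

Lemma opt_JOall (lam : A -> R) Z X : (forall i, 0 < lam i) -> JOall lam Z ->
  LPoptimal a r d lam X -> JOall lam X.
Proof.
move=> hl hZ [fX oX]; split=> // c c0.
have [k1 k2] := key hZ fX (lexx 0).
have eobj := oX Z (proj1 hZ).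
rewrite !LPobj_sup // in eobj.
have e : delay d (up lam c) Z = delay d (up lam c) X by apply: k2 => //; apply/le_anti; rewrite k1 eobj.
split; first by apply: jfeas_sub fX; exact: subsetT.
move=> Y fY; rewrite -e; case: hZ => _ oZ; by case: (oZ c c0) => _; apply.
Qed.

Lemma zero_sr : supply_respecting (fun (_ : A) (_ : G) => 0 : R).
Proof. by split => // j; rewrite big1 // ler01. Qed.

Lemma build (lam : A -> R) c : 0 <= c ->
  exists Z, JO (sup lam c) Z /\ forall c', c < c' -> JO (up lam c') Z.
Proof.
have [n] := ubnP #|sup lam c|; elim: n c => // n IH c hn c0.
case: (sup_up lam c) => [e|[m [cm e hm]]].
  exists (fun _ _ => 0); rewrite e; split; first exact: JO0 zero_sr.
  by move=> c' cc; rewrite (up_empty e cc); exact: JO0 zero_sr.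
have [Z [oZ hZ]] := IH m (leq_trans hm hn) (le_trans c0 (ltW cm)).
have ssub : sup lam m \subset up lam m.
  by apply/subsetP => i; rewrite !inE; apply: ltW.
have [Z' [oZ' hZ']] := ext_sub oZ ssub.
exists Z'; rewrite e; split=> // c' cc'.
case: (leP c' m) => hc'; first by rewrite (up_mid e cc' hc').
have sub' : up lam c' \subset sup lam m.
  by apply/subsetP => i; rewrite !inE; apply: lt_le_trans.
apply: (JO_pres sub' (hZ c' hc')).
  by apply: jfeas_sub (proj1 oZ'); apply: subset_trans sub' ssub.
by move=> i /hZ'.
Qed.

Lemma JOall_exists (lam : A -> R) : (forall i, 0 < lam i) -> exists Z, JOall lam Z.
Proof.
move=> hl; have [Z [oZ hZ]] := build lam (lexx 0).
exists Z; split => //; rewrite /LPfeasible -(sup0 hl); by case: oZ.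
Qed.

End Gen.
Section Gen2.
Variables (R : realFieldType) (A G C : finType).
Variables (a : A -> G -> C -> R) (r : A -> C -> R) (d : A -> G -> R).
Hypothesis hext : extensibility a r d.

Local Notation JO := (jointly_optimal a r d).

Lemma dsplit1 (U T : {set A}) X : T \subset U ->
  delay d T X = delay d U X - delay d (U :\: T) X.
Proof.
move=> sTU; rewrite /delay [in RHS](big_setID T) /= (setIidPr sTU); ring.
Qed.

Lemma dsplit2 (U V : {set A}) X : V \subset U ->
  delay d (U :\: V) X = delay d U X - delay d V X.
Proof.
move=> sVU; rewrite /delay [in RHS](big_setID V) /= (setIidPr sVU); ring.
Qed.

Lemma refine (lam : A -> R) c (T : {set A}) : (forall i, 0 < lam i) -> 0 < c ->
  (forall i, i \in T -> lam i = c) ->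
  exists Z, JOall a r d lam Z /\ JO (up lam c :\: T) Z.
Proof.
move=> hl c0 hT.
pose p := \big[Order.max/0]_(j | lam j < c) lam j.
have p0 : 0 <= p by apply: bigmax_ge_id.
have pc : p < c by apply: bigmax_lt.
have hp : forall j, lam j < c -> lam j <= p by move=> j hj; apply: le_bigmax_cond.
pose q := (c + p) / 2.
have pq : p < q by rewrite /q; lra.
have qc : q < c by rewrite /q; lra.
pose lam2 := fun i => if i \in T then q else lam i.
have hl2 : forall i, 0 < lam2 i.
  by move=> i; rewrite /lam2; case: ifP => _ //; lra.
have [Z hZ] := JOall_exists hext hl2.
exists Z; split.
  split; first by case: hZ.
  move=> t t0.
  have [t' [t'0 ->]] : exists t', 0 < t' /\ up lam t = up lam2 t'.
    case: (leP t p) => htp.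
      exists t; split => //; apply/setP => i; rewrite !inE /lam2; case: ifP => iT //.
      by rewrite hT //; apply/idP/idP => _; lra.
    case: (leP t c) => htc.
      exists q; split; first by lra.
      apply/setP => i; rewrite !inE /lam2; case: ifP => iT.
        by rewrite hT // htc lexx.
      case: (ltP (lam i) c) => hi.
        have := hp i hi => hip.
        by apply/idP/idP => h; exfalso; lra.
      by apply/idP/idP => _; lra.
    exists t; split => //; apply/setP => i; rewrite !inE /lam2; case: ifP => iT //.
    by rewrite hT //; apply/idP/idP => h; exfalso; lra.
  by case: hZ => _; apply.
have -> : up lam c :\: T = up lam2 c.
  apply/setP => i; rewrite !inE /lam2; case: ifP => iT /=; last by [].
  by apply/esym/negbTE; rewrite -ltNge.
by case: hZ => _; apply.
Qed.

Lemma maxl (lam : A -> R) c (T : {set A}) Z : (forall i, 0 < lam i) -> 0 < c ->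
  T \subset up lam c -> JOall a r d lam Z -> JO (up lam c :\: T) Z ->
  is_max_delay a r d lam T (delay d T Z).
Proof.
move=> hl c0 sT hZ hW; split.
  by exists Z; split => //; apply: JOall_opt.
move=> X oX; have hX := opt_JOall hl hZ oX.
rewrite (dsplit1 X sT) (dsplit1 Z sT).
rewrite (JO_eq (proj2 hX c c0) (proj2 hZ c c0)).
apply: lerB => //; case: hW => _; apply.
by apply: jfeas_sub (proj1 hX); apply: subsetT.
Qed.

End Gen2.
Section LP.
Variables (R : realFieldType) (A : finType).

Lemma lp_uniq (lam : A -> R) P g h i : level_partition lam P ->
  (g < size P)%N -> (h < size P)%N -> i \in nth set0 P g -> i \in nth set0 P h -> g = h.
Proof.
move=> [_ [_ h3]] gs hs ig ih; case: (ltngtP g h) => // H.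
  by have := (h3 _ _ _ _ gs hs ig ih).2 H; rewrite ltxx.
by have := (h3 _ _ _ _ hs gs ih ig).2 H; rewrite ltxx.
Qed.

Lemma lp_le (lam : A -> R) P g h i j : level_partition lam P ->
  (g < size P)%N -> (h < size P)%N -> i \in nth set0 P g -> j \in nth set0 P h ->
  (lam i <= lam j <-> (g <= h)%N).
Proof.
move=> [_ [_ h3]] gs hs ig jh; split => H.
  rewrite leqNgt; apply/negP => H'; move: H; rewrite leNgt.
  by rewrite (proj2 (h3 _ _ _ _ hs gs jh ig) H').
rewrite leNgt; apply/negP => H'; have := (h3 _ _ _ _ hs gs jh ig).1 H'.
by rewrite ltnNge H.
Qed.

Lemma lp_lt (lam : A -> R) P g h i j : level_partition lam P ->
  (g < size P)%N -> (h < size P)%N -> i \in nth set0 P g -> j \in nth set0 P h ->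
  (lam i < lam j <-> (g < h)%N).
Proof. by move=> [_ [_ h3]] gs hs ig jh; apply: h3. Qed.

Lemma nthP1 (S : nat -> {set A}) n B h : (h < n)%N ->
  nth set0 ([seq S g | g <- iota 1 n] ++ [:: B]) h = S h.+1.
Proof.
move=> hn; rewrite nth_cat size_map size_iota hn (nth_map 0%N) ?size_iota //.
by rewrite nth_iota.
Qed.

Lemma nthP2 (S : nat -> {set A}) n B :
  nth set0 ([seq S g | g <- iota 1 n] ++ [:: B]) n = B.
Proof. by rewrite nth_cat size_map size_iota ltnn subnn. Qed.

Lemma sizeP (S : nat -> {set A}) n B :
  size ([seq S g | g <- iota 1 n] ++ [:: B]) = n.+1.
Proof. by rewrite size_cat size_map size_iota addn1. Qed.

End LP.
Unset Implicit Arguments. Set Strict Implicit.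
Theorem lemmaF5 (R : realFieldType) (A G C : finType)
    (a : A -> G -> C -> R) (r : A -> C -> R) (d : A -> G -> R)
    (hr : forall i k, 0 <= r i k) (hd : forall i j, 0 <= d i j)
    (hfeas : exists X, LPfeasible a r X)
    (hext : extensibility a r d)
    (k : nat) (hk : (0 < k)%N) (S : nat -> {set A}) (A' : {set A})
    (lam lam' : A -> R)
    (hlam : forall i, 0 < lam i) (hlam' : forall i, 0 < lam' i)
    (hle : forall i, lam i <= lam' i)
    (hP : level_partition lam ([seq S g | g <- iota 1 k.-1] ++ [:: A']))
    (hSk : S k \subset A')
    (hP' : level_partition lam' ([seq S g | g <- iota 1 k] ++ [:: A' :\: S k])) :
  forall g : nat, (1 <= g < k)%N ->
    (forall X X', LPoptimal a r d lam X -> LPoptimal a r d lam' X' ->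
        delay d (S g) X = delay d (S g) X') /\
    (forall T : {set A}, T \subset S g ->
        exists m, is_max_delay a r d lam T m /\ is_max_delay a r d lam' T m).
Proof.
move=> g /andP [g1 gk].
set P := [seq S g | g <- iota 1 k.-1] ++ [:: A'] in hP.
set P' := [seq S g | g <- iota 1 k] ++ [:: A' :\: S k] in hP'.
have szP : size P = k by rewrite /P sizeP prednK.
have szP' : size P' = k.+1 by rewrite /P' sizeP.
have nP : forall h, (h < k.-1)%N -> nth set0 P h = S h.+1 by move=> h hh; apply: nthP1.
have nP' : forall h, (h < k)%N -> nth set0 P' h = S h.+1 by move=> h hh; apply: nthP1.
pose g0 := g.-1.
have g0k : (g0 < k.-1)%N by rewrite /g0; lia.
have g0g : g0.+1 = g by rewrite /g0; lia.
have ng0 : nth set0 P g0 = S g by rewrite nP // g0g.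
have ng0' : nth set0 P' g0 = S g by rewrite nP' ?g0g //; lia.
have g0P : (g0 < size P)%N by rewrite szP; lia.
have g0P' : (g0 < size P')%N by rewrite szP'; lia.
have [i0 i0S] : exists i0, i0 \in S g.
  case: (set_0Vmem (S g)) => [e|[i0 hi]]; last by exists i0.
  by have := (proj1 hP) g0 g0P; rewrite ng0 e eqxx.
have i0P : i0 \in nth set0 P g0 by rewrite ng0.
have i0P' : i0 \in nth set0 P' g0 by rewrite ng0'.
have blk : forall j, exists h h', [/\ (h < size P)%N, (h' < size P')%N,
    j \in nth set0 P h, j \in nth set0 P' h' & (h = h' \/ (k.-1 <= h /\ k.-1 <= h')%N)].
  move=> j.
  have [h [hs jh]] := (proj1 (proj2 hP)) j.
  have [h' [hs' jh']] := (proj1 (proj2 hP')) j.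
  exists h, h'; split => //.
  case: (ltnP h k.-1) => hh.
    left; apply: (lp_uniq hP' _ hs' _ jh'); first by rewrite szP'; lia.
    by rewrite nP' ?(nP _ hh) // in jh *; lia.
  case: (ltnP h' k.-1) => hh'.
    left; apply: (lp_uniq hP hs _ jh); first by rewrite szP; lia.
    by rewrite nP // -nP' //; lia.
  by right.
pose c := lam i0; pose c' := lam' i0.
have c0 : 0 < c by apply: hlam.
have c'0 : 0 < c' by apply: hlam'.
have F1 : up lam c = up lam' c'.
  apply/setP => j; rewrite !inE; have [h [h' [hs hs' jh jh' hh]]] := blk j.
  apply/idP/idP => H.
    apply/(lp_le hP' g0P' hs' i0P' jh'); have := (lp_le hP g0P hs i0P jh).1 H; lia.
  apply/(lp_le hP g0P hs i0P jh); have := (lp_le hP' g0P' hs' i0P' jh').1 H; lia.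
have F2 : sup lam c = sup lam' c'.
  apply/setP => j; rewrite !inE; have [h [h' [hs hs' jh jh' hh]]] := blk j.
  apply/idP/idP => H.
    apply/(lp_lt hP' g0P' hs' i0P' jh'); have := (lp_lt hP g0P hs i0P jh).1 H; lia.
  apply/(lp_lt hP g0P hs i0P jh); have := (lp_lt hP' g0P' hs' i0P' jh').1 H; lia.
have inS : forall j, j \in S g -> lam j = c /\ lam' j = c'.
  move=> j jS; have jP : j \in nth set0 P g0 by rewrite ng0.
  have jP' : j \in nth set0 P' g0 by rewrite ng0'.
  split; apply/le_anti/andP; split.
  - by apply/(lp_le hP g0P g0P jP i0P).
  - by apply/(lp_le hP g0P g0P i0P jP).
  - by apply/(lp_le hP' g0P' g0P' jP' i0P').
  - by apply/(lp_le hP' g0P' g0P' i0P' jP').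
have eSg : S g = up lam c :\: sup lam c.
  apply/setP => j; rewrite !inE; apply/idP/idP => [jS|].
    by have [-> _] := inS j jS; rewrite ltxx lexx.
  move=> /andP [H2 H1]; have [h [h' [hs hs' jh jh' hh]]] := blk j.
  have := (lp_le hP g0P hs i0P jh).1 H1.
  have : ~ (g0 < h)%N by move=> H; move/negP: H2; apply; exact: (proj2 (lp_lt hP g0P hs i0P jh) H).
  move=> H3 H4; have eh : h = g0 by lia.
  by rewrite -ng0 -eh.
have ssu : sup lam c \subset up lam c by apply/subsetP => j; rewrite !inE; apply: ltW.
split.
  move=> X X' oX oX'.
  have [Z hZ] := JOall_exists hext hlam.
  have [Z' hZ'] := JOall_exists hext hlam'.
  have hX := opt_JOall hlam hZ oX.
  have hX' := opt_JOall hlam' hZ' oX'.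
  rewrite eSg !dsplit2 //.
  have e1 : delay d (up lam c) X = delay d (up lam c) X'.
    apply: JO_eq; first exact: (proj2 hX c c0).
    by rewrite F1; exact: (proj2 hX' c' c'0).
  have e2 : delay d (sup lam c) X = delay d (sup lam c) X'.
    apply: JO_eq; first exact: (JOall_sup hX (ltW c0)).
    by rewrite F2; exact: (JOall_sup hX' (ltW c'0)).
  by rewrite e1 e2.
move=> T sT.
have hT : forall i, i \in T -> lam i = c by move=> i /(subsetP sT) /inS [].
have hT' : forall i, i \in T -> lam' i = c' by move=> i /(subsetP sT) /inS [].
have sTu : T \subset up lam c.
  by apply: subset_trans sT _; rewrite eSg; apply: subsetDl.
have sTu' : T \subset up lam' c' by rewrite -F1.
have [Z [hZ hW]] := refine hext hlam c0 hT.
have [Z' [hZ' hW']] := refine hext hlam' c'0 hT'.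
exists (delay d T Z); split; first exact: maxl hlam c0 sTu hZ hW.
have -> : delay d T Z = delay d T Z'.
  rewrite (dsplit1 d Z sTu) (dsplit1 d Z' sTu).
  have e1 : delay d (up lam c) Z = delay d (up lam c) Z'.
    apply: JO_eq; first exact: (proj2 hZ c c0).
    by rewrite F1; exact: (proj2 hZ' c' c'0).
  have e2 : delay d (up lam c :\: T) Z = delay d (up lam c :\: T) Z'.
    by apply: JO_eq; [exact: hW | rewrite F1; exact: hW'].
  by rewrite e1 e2.
exact: maxl hlam' c'0 sTu' hZ' hW'.
Qed.
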